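(* Let $n$ be a positive integer. The Logarithmic Least Squares Method is the unique weighting method $f: \mathcal{A}^{n \times n} \to \mathcal{R}^n$ satisfying correctness and invariance to $\alpha$-transformation on a triad. That is, a weighting method $f$ satisfies both properties if and only if, for every $\mathbf{A} \in \mathcal{A}^{n\times n}$ and every $i$, \[ f_i(\mathbf{A}) = \frac{\prod_{j=1}^n a_{i,j}^{1/n}}{\sum_{k=1}^n \prod_{j=1}^n a_{k,j}^{1/n}}. \]
   Context: A pairwise comparison matrix of size $n$ is a matrix $\mathbf{A} = [a_{i,j}]$ with all entries positive and $a_{j,i} = 1/a_{i,j}$ for all $1 \le i,j \le n$; $\mathcal{A}^{n\times n}$ denotes the set of these. $\mathbf{A}$ is consistent if $a_{i,k} = a_{i,j}a_{j,k}$ for all $i,j,k$. A weight vector is $\mathbf{w} \in \mathbb{R}^n$ with all entries positive and $\sum_i w_i = 1$; $\mathcal{R}^n$ denotes the set of weight vectors. A weighting method is any function $f: \mathcal{A}^{n\times n} \to \mathcal{R}^n$. The Logarithmic Least Squares Method (LLSM) assigns to $\mathbf{A}$ the minimizer over $\mathbf{w} \in \mathcal{R}^n$ of $\sum_{i=1}^n\sum_{j=1}^n [\log a_{i,j} - \log(w_i/w_j)]^2$, which equals the normalized row geometric mean vector $w_i = \prod_j a_{i,j}^{1/n} / \sum_k \prod_j a_{k,j}^{1/n}$. Correctness: $f$ is correct if for every consistent $\mathbf{A}\in\mathcal{A}^{n\times n}$, $f_i(\mathbf{A})/f_j(\mathbf{A}) = a_{i,j}$ for all $i,j$. An $\alpha$-transformation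 on the triad $(i,j,k)$ (three distinct indices), with $\alpha>0$, maps $\mathbf{A}$ to the pairwise comparison matrix $\hat{\mathbf{A}}$ with $\hat a_{i,j} = \alpha a_{i,j}$, $\hat a_{j,i} = a_{j,i}/\alpha$, $\hat a_{j,k} = \alpha a_{j,k}$, $\hat a_{k,j} = a_{k,j}/\alpha$, $\hat a_{k,i} = \alpha a_{k,i}$, $\hat a_{i,k} = a_{i,k}/\alpha$, and all other entries unchanged. Invariance to $\alpha$-transformation on a triad: $f(\mathbf{A}) = f(\hat{\mathbf{A}})$ whenever $\hat{\mathbf{A}}$ is obtained from $\mathbf{A}$ by an $\alpha$-transformation on a triad. *)

(* Defs.v *)
From HB Require Import structures.
From mathcomp Require Import all_boot all_order all_algebra.
From mathcomp Require Import reals exp.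
Set Implicit Arguments. Unset Strict Implicit. Unset Printing Implicit Defensive.
Import Order.TTheory GRing.Theory Num.Theory.
Local Open Scope ring_scope.

Section Defs.
Variable R : realType.

Definition is_pcm n (A : 'M[R]_n) : Prop :=
  forall i j : 'I_n, 0 < A i j /\ A j i = (A i j)^-1.

Definition is_consistent n (A : 'M[R]_n) : Prop :=
  forall i j k : 'I_n, A i k = A i j * A j k.

Definition is_weight_vector n (w : 'I_n -> R) : Prop :=
  (forall i, 0 < w i) /\ \sum_(i < n) w i = 1.

(* a weighting method A^{nxn} -> R^n, represented as a function on all
   matrices whose values on pairwise comparison matrices are weight vectors *)
Definition is_weighting_method n (f : 'M[R]_n -> 'I_n -> R) : Prop :=
  forall A, is_pcm A -> is_weight_vector (f A).

Definition row_geomean n (A : 'M[R]_n) (i : 'I_n) : R :=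
  \prod_(j < n) (A i j) `^ (n%:R^-1).

Definition llsm n (A : 'M[R]_n) (i : 'I_n) : R :=
  row_geomean A i / \sum_(k < n) row_geomean A k.

Definition correct n (f : 'M[R]_n -> 'I_n -> R) : Prop :=
  forall A, is_pcm A -> is_consistent A ->
    forall i j, f A i / f A j = A i j.

Definition alpha_transform n (A : 'M[R]_n) (i j k : 'I_n) (alpha : R)
  : 'M[R]_n :=
  \matrix_(p, q)
    if (p == i) && (q == j) then alpha * A i j
    else if (p == j) && (q == i) then A j i / alpha
    else if (p == j) && (q == k) then alpha * A j k
    else if (p == k) && (q == j) then A k j / alpha
    else if (p == k) && (q == i) then alpha * A k i
    else if (p == i) && (q == k) then A i k / alpha
    else A p q.

Definition triad_invariant n (f : 'M[R]_n -> 'I_n -> R) : Prop :=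
  forall A, is_pcm A -> forall (i j k : 'I_n) (alpha : R),
    i != j -> j != k -> i != k -> 0 < alpha ->
    f A = f (alpha_transform A i j k alpha).

End Defs.

(* Main.v *)
Require Import Defs.
From HB Require Import structures.
From mathcomp Require Import all_boot all_order all_algebra.
From mathcomp Require Import reals exp.
From mathcomp Require sequences.
From mathcomp Require Import ring lra.
Local Notation expR := sequences.expR.
Import Order.TTheory GRing.Theory Num.Theory.
Local Open Scope ring_scope.
Set Implicit Arguments. Unset Strict Implicit.

Section S.
Variable R : realType.
Variable n : nat.
Local Notation I := 'I_n.+1.
Local Notation M := 'M[R]_n.+1.

Definition L (A : M) (p : I) : R := \sum_q ln (A p q).

Lemma pcm_diag (A : M) p : is_pcm A -> A p p = 1.
Proof.
move=> h; have [h1 h2] := h p p.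
have : A p p * A p p = 1 by rewrite {1}h2 mulVf // gt_eqF.
move=> /eqP; rewrite -expr2 sqrf_eq1 => /orP [/eqP //|/eqP e].
by move: h1; rewrite e ltr0N1.
Qed.

Lemma geomean_exp (A : M) p : is_pcm A ->
  row_geomean A p = expR (n.+1%:R^-1 * L A p).
Proof.
move=> h; rewrite /row_geomean /L mulr_sumr expR_sum; apply: eq_bigr => q _.
by rewrite /powR gt_eqF; [|exact: (h p q).1].
Qed.

Lemma skew_sum (x : I -> I -> R) : (forall p q, x q p = - x p q) ->
  \sum_p \sum_q x p q = 0.
Proof.
move=> hx; set S := (X in X = 0).
have : S = - S.
  rewrite {1}/S exchange_big /= -sumrN; apply: eq_bigr => p _.
  rewrite -sumrN; apply: eq_bigr => q _; exact: hx.
move/eqP; rewrite -subr_eq0 opprK -mulr2n -mulr_natr mulf_eq0 pnatr_eq0 orbF.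
by move/eqP.
Qed.

Lemma L_skew (A : M) : is_pcm A -> \sum_p L A p = 0.
Proof.
move=> h; apply: skew_sum => p q; have [h1 ->] := h p q.
by rewrite lnV // posrE.
Qed.

Section Step.
Variables (A : M) (z i j : I) (a : R).
Hypotheses (hA : is_pcm A) (hi : i != z) (hj : j != z) (hij : i != j) (ha : 0 < a).
Local Notation B := (alpha_transform A z i j a).

Let hi' : (z == i) = false. Proof. by rewrite eq_sym (negbTE hi). Qed.
Let hj' : (z == j) = false. Proof. by rewrite eq_sym (negbTE hj). Qed.
Let hij' : (j == i) = false. Proof. by rewrite eq_sym (negbTE hij). Qed.
Let hi2 := negbTE hi.
Let hj2 := negbTE hj.
Let hij2 := negbTE hij.

Ltac cases p :=
  let h1 := fresh "h" in let h2 := fresh "h" in let h3 := fresh "h" in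
  have [->|h1] := eqVneq p z; [|have [->|h2] := eqVneq p i; [|have [->|h3] := eqVneq p j]].

Ltac simpall := rewrite ?mxE; repeat (match goal with
  | H : is_true (?x != ?y) |- context[?x == ?y] => rewrite (negbTE H)
  | H : is_true (?x != ?y) |- context[?y == ?x] => rewrite [y == x]eq_sym (negbTE H)
  end); rewrite ?eqxx /=.

Lemma step_pcm : is_pcm B.
Proof.
move=> p q; have pos := fun x y => (hA x y).1; have [hp hq] := hA p q.
cases p; cases q; simpall.
all: try (exact: hA).
all: split; [first [apply: mulr_gt0 | apply: divr_gt0] | rewrite [in LHS](hA _ _).2].
all: by [exact: pos | rewrite ?invr_gt0 | rewrite invfM mulrC | rewrite invf_div].
Qed.

Lemma step_ij : B i j = a * A i j.
Proof. by simpall. Qed.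

Lemma step_frame p q : p != z -> q != z -> ~~ ((p == i) && (q == j)) ->
  ~~ ((p == j) && (q == i)) -> B p q = A p q.
Proof.
move=> hp hq h1 h2; rewrite mxE (negbTE hp) (negbTE hq) (negbTE h1) (negbTE h2) /=.
by rewrite !andbF.
Qed.

Lemma sum_shift (u v : I -> R) x y : x != y -> (forall q, 0 < v q) ->
  u x = a * v x -> u y = v y / a -> (forall q, q != x -> q != y -> u q = v q) ->
  \sum_q ln (u q) = \sum_q ln (v q).
Proof.
move=> hxy hv hx hy ho.
have split2 (w : I -> R) : \sum_q w q = w x + w y + \sum_(q | (q != x) && (q != y)) w q.
  rewrite (bigD1 x) //= (bigD1 y) /=; last by rewrite eq_sym.
  rewrite addrA; congr (_ + _); apply: eq_bigl => q; by rewrite andbC.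
rewrite split2 [RHS]split2 hx hy lnM ?ln_div ?posrE ?hv //.
rewrite (eq_bigr (fun q => ln (v q))); last by move=> q /andP [] h1 h2; rewrite ho.
congr (_ + _); ring.
Qed.

Lemma step_L p : L B p = L A p.
Proof.
have pos := fun x y => (hA x y).1.
rewrite /L; cases p.
- apply: (sum_shift (x := i) (y := j)) => //; try by simpall.
  by move=> q hq1 hq2; simpall.
- apply: (sum_shift (x := j) (y := z)) => //; try by simpall.
  by move=> q hq1 hq2; simpall.
- apply: (sum_shift (x := z) (y := i)) => //; try by simpall.
  by move=> q hq1 hq2; simpall.
- by apply: eq_bigr => q _; simpall.
Qed.
End Step.

Definition good (x : I * I) := (x.1 != ord0) && (x.2 != ord0) && (x.1 != x.2).
Definition stepA (c : I -> I -> R) (A : M) (x : I * I) :=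
  alpha_transform A ord0 x.1 x.2 (c x.1 x.2 / A x.1 x.2).

Lemma fold_inv (f : M -> I -> R) (htri : triad_invariant f) (c : I -> I -> R)
  (cpos : forall p q, 0 < c p q) (cinv : forall p q, c q p = (c p q)^-1) :
  forall s, all good s -> forall A, is_pcm A ->
  [/\ is_pcm (foldl (stepA c) A s), f (foldl (stepA c) A s) = f A,
   (forall p, L (foldl (stepA c) A s) p = L A p) &
   forall p q, p != ord0 -> q != ord0 -> p != q ->
     foldl (stepA c) A s p q = if ((p, q) \in s) || ((q, p) \in s) then c p q else A p q].
Proof.
elim=> [|x s IH] /=; first by move=> _ A hA; split.
case: x => x1 x2 /andP [/andP [/andP [h1 h2] h12] gs] A hA /=.
have ha : 0 < c x1 x2 / A x1 x2 by rewrite divr_gt0 // (hA _ _).1.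
have hA1 := step_pcm hA h1 h2 h12 ha.
have [e1 e2 e3 e4] := IH gs _ hA1; split => //.
- rewrite e2 /stepA /=; apply/esym/htri => //; by rewrite eq_sym.
- by move=> p; rewrite e3 /stepA /= step_L.
move=> p q hp hq hpq; rewrite e4 // !in_cons.
case: ifP => [/orP [] -> |/norP [/negbTE -> /negbTE ->]]; rewrite ?orbT // !orbF.
rewrite /stepA /=.
have [[-> ->]|n1] := eqVneq (p, q) (x1, x2).
  by rewrite /= step_ij // divfK // gt_eqF // (hA _ _).1.
have [e|n2] := eqVneq (q, p) (x1, x2).
  case: e => E1 E2; subst q p.
  rewrite /= (step_pcm hA h1 h2 h12 ha x1 x2).2 step_ij // [c x2 x1]cinv divfK //.
  by rewrite gt_eqF // (hA _ _).1.
rewrite /= step_frame //.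
all: by apply/negP => /andP [/eqP E1 /eqP E2]; move: n1 n2; rewrite E1 E2 ?eqxx.
Qed.

Lemma llsmE (A : M) p : is_pcm A ->
  llsm A p = expR (n.+1%:R^-1 * L A p) / \sum_k expR (n.+1%:R^-1 * L A k).
Proof.
by move=> hA; rewrite /llsm geomean_exp //; congr (_ / _); apply: eq_bigr => k _; rewrite geomean_exp.
Qed.

Lemma sum_pos (F : I -> R) : (forall k, 0 < F k) -> 0 < \sum_k F k.
Proof.
move=> hF; rewrite big_ord_recl.
have h1 := hF ord0.
have h2 : 0 <= \sum_(k < n) F (lift ord0 k) by apply: sumr_ge0 => k _; apply: ltW.
lra.
Qed.

Lemma invn_mul (x : R) : n.+1%:R^-1 * (x *+ n.+1) = x.
Proof. by rewrite -(mulr_natl x n.+1) mulrA mulVf ?mul1r // pnatr_eq0. Qed.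

Lemma llsm_ratio (A : M) p q : is_pcm A ->
  llsm A p / llsm A q = expR (n.+1%:R^-1 * (L A p - L A q)).
Proof.
move=> hA; rewrite !llsmE //.
set S := \sum_k _.
have hS : S != 0 by rewrite gt_eqF // sum_pos // => k; apply: expR_gt0.
have hq : expR (n.+1%:R^-1 * L A q) != 0 by rewrite gt_eqF // expR_gt0.
rewrite mulrBr expRB; field; by rewrite hS hq.
Qed.

Lemma llsm_correct : correct (@llsm R n.+1).
Proof.
move=> A hA hc p q; rewrite llsm_ratio //.
have -> : L A p - L A q = ln (A p q) *+ n.+1.
  rewrite /L -sumrB (_ : ln (A p q) *+ n.+1 = \sum_(r : I) ln (A p q)); last first.
    by rewrite sumr_const card_ord.
  apply: eq_bigr => r _.
  rewrite (hc p q r) lnM ?posrE ?(hA _ _).1 //; ring.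
have -> : n.+1%:R^-1 * (ln (A p q) *+ n.+1) = ln (A p q) :> R.
  exact: invn_mul.
by rewrite lnK // posrE (hA _ _).1.
Qed.


Lemma triad_pcm_L (A : M) (i j k : I) a : is_pcm A -> i != j -> j != k -> i != k -> 0 < a ->
  is_pcm (alpha_transform A i j k a) /\ forall p, L (alpha_transform A i j k a) p = L A p.
Proof.
move=> hA hij hjk hik ha.
have h1 : j != i by rewrite eq_sym.
have h2 : k != i by rewrite eq_sym.
split; [exact: step_pcm | move=> p; exact: step_L].
Qed.

Lemma main_dir (f : M -> I -> R) (hf : is_weighting_method f) (hc : correct f)
  (ht : triad_invariant f) (A : M) (hA : is_pcm A) p : f A p = llsm A p.
Proof.
pose g (p : I) := expR (n.+1%:R^-1 * L A p).
have gpos : forall p, 0 < g p by move=> q; apply: expR_gt0.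
pose c p q := g p / g q.
have cpos : forall p q, 0 < c p q by move=> q r; rewrite divr_gt0.
have cinv : forall p q, c q p = (c p q)^-1 by move=> q r; rewrite /c invf_div.
pose s := [seq x <- enum {: I * I} | good x].
have sg : all good s by apply: filter_all.
have [hB hfB hLB hBpq] := fold_inv ht cpos cinv sg hA.
set B := foldl (stepA c) A s in hB hfB hLB hBpq.
have hsum : forall p, \sum_q ln (c p q) = L A p.
  move=> q; rewrite (eq_bigr (fun r => n.+1%:R^-1 * L A q - n.+1%:R^-1 * L A r)); last first.
    by move=> r _; rewrite ln_div ?posrE // !expRK.
  rewrite sumrB -[X in _ - X]mulr_sumr L_skew // mulr0 subr0 sumr_const card_ord.
  by rewrite -mulrnAr invn_mul.
have c1 : forall p q, p != ord0 -> q != ord0 -> B p q = c p q.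
  move=> q r hq hr; have [->|hqr] := eqVneq q r.
    by rewrite pcm_diag // /c divff // gt_eqF.
  rewrite hBpq // (_ : (q, r) \in s = true) //.
  by rewrite mem_filter /good /= hq hr hqr mem_enum.
have c2 : forall p, p != ord0 -> B p ord0 = c p ord0.
  move=> q hq; apply: ln_inj; rewrite ?posrE ?(hB _ _).1 ?cpos //.
  have := hLB q; rewrite -(hsum q) /L (bigD1 ord0) //= [X in _ = X -> _](bigD1 ord0) //=.
  rewrite [X in _ + X = _ -> _](eq_bigr (fun r => ln (c q r))); last by move=> r hr; rewrite c1.
  by move/addIr.
have callB : forall p q, B p q = c p q.
  move=> q r; have [-> | hq] := eqVneq q ord0; have [-> | hr] := eqVneq r ord0.
  - by rewrite pcm_diag // /c divff // gt_eqF.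
  - by rewrite (hB r ord0).2 c2 // -cinv.
  - by rewrite c2.
  - by rewrite c1.
have hcons : is_consistent B.
  move=> q r t; rewrite !callB /c; field.
  by rewrite !gt_eqF.
have hr := hc B hB hcons.
have [fpos fsum] := hf A hA.
have gne : forall q, g q != 0 by move=> q; rewrite gt_eqF.
have key : forall q, f A q = g q * (f A ord0 / g ord0).
  move=> q; have := hr q ord0; rewrite hfB callB /c => e.
  have -> : f A q = f A q / f A ord0 * f A ord0 by rewrite divfK // gt_eqF.
  by rewrite e; field.
rewrite (eq_bigr (fun q => g q * (f A ord0 / g ord0))) in fsum; last by move=> q _; rewrite key.
rewrite -mulr_suml in fsum.
rewrite llsmE //; change (f A p = g p / \sum_k g k).
have hS : \sum_k g k != 0 by rewrite gt_eqF // sum_pos.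
rewrite key; have -> : g p / \sum_k g k = g p * ((\sum_k g k) * (f A ord0 / g ord0)) / \sum_k g k.
  by rewrite fsum mulr1.
by field; rewrite hS gne.
Qed.
End S.

From Stdlib Require Import FunctionalExtensionality.
Unset Implicit Arguments.

Theorem theorem4p1 (R : realType) (n : nat) (hn : (0 < n)%N)
  (f : 'M[R]_n -> 'I_n -> R) (hf : is_weighting_method f) :
  (correct f /\ triad_invariant f) <->
  (forall A : 'M[R]_n, is_pcm A -> forall i : 'I_n, f A i = llsm A i).
Proof.
case: n hn f hf => // n _ f hf; split.
- case=> hc ht A hA i; exact: main_dir.
- move=> hl; split.
  + move=> A hA hc i j; rewrite !hl //; exact: llsm_correct.
  + move=> A hA i j k a hij hjk hik ha.
    have [hB hL] := triad_pcm_L hA hij hjk hik ha.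
    apply: functional_extensionality => p; rewrite !hl // !llsmE //.
    rewrite hL; congr (_ / _); apply: eq_bigr => q _; by rewrite hL.
Qed.
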